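(* Let bidder $i$ have a constraint-homogeneous valuation with interest set $S$ and per-unit value $\hat v$, let $s^*=\lceil |S|/2\rceil$, and let $b_i'$ be the Core Deviation of $i$. Let $b$ be any strategy profile and let $p_1\le p_2\le\dots\le p_{|S|}$ be the prices at which the items of $S$ are sold under $b$, sorted in non-decreasing order. If bidder $i$ wins fewer than $s^*$ items of $S$ in the profile $(b_i'(b_i),b_{-i})$, then $p_{s^*}\ge \hat v/2$.
   Context: Draft auction: $n$ bidders, items $[m]$; rounds are run while the set $I$ of remaining items is nonempty: each bidder submits a sealed bid $b_i\ge0$ and a set $X_i\subseteq I$; the highest bidder (ties arbitrary) gets her set (removed from $I$) and pays her bid times its size; winner, winning bid and bundle are announced. A strategy maps observed histories to actions. The price at which an item is sold is the winning bid of the round in which it is allocated. Constraint-homogeneous valuation: $v(T)=\hat v|T\cap S|$. Items of $S$ are called units. For the original strategy $b_i$ (within profile $b$), $b_{it}$ denotes $i$'s bid in auction $t$, $k_{it}$ the number of units she obtains in auction $t$, $k_{i,<t}$ the number obtained before auction $t$. Core Deviation $b_i'$: let $b_i^*=\hat v/2$. In every auction $t$ she bids $\max\{b_i^*,b_{it}\}$. If she wins with bid $b_i^*$ (i.e. $b_i^*>b_{it}$), she takes $s^*-k_{i,<t}$ units of $S$ and drops out. If she wins with bid $b_{it}$, she takes exactly what she took under $b_i$ in auction $t$. She keeps bidding this way until she has acquired $s^*$ units or the remaining units are not enough to complete $s^*$ units. *)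

(* Defs.v *)
From HB Require Import structures.
From mathcomp Require Import all_boot all_order all_algebra.
Set Implicit Arguments. Unset Strict Implicit. Unset Printing Implicit Defensive.
Import Order.TTheory GRing.Theory Num.Theory.
Local Open Scope ring_scope.

Section DraftAuction.
Variables (R : realFieldType) (n m : nat).

(* Public announcement of a round: (winner, winning bid, bundle). *)
Definition announcement := ('I_n * R * {set 'I_m})%type.
Definition history := seq announcement.
Definition action := (R * {set 'I_m})%type.
Definition strategy := history -> action.
Definition profile := 'I_n -> strategy.
(* Tie-breaking: a (history dependent) priority order on the bidders. *)
Definition tiebreak := history -> seq 'I_n.

Definition allocated (h : history) : {set 'I_m} := \bigcup_(a <- h) a.2.
Definition remaining (h : history) : {set 'I_m} := ~: allocated h.
Definition won (j : 'I_n) (h : history) : {set 'I_m} :=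
  \bigcup_(a <- h | a.1.1 == j) a.2.

Definition valid_strategy (s : strategy) : Prop :=
  forall h, 0 <= (s h).1 /\ (s h).2 \subset remaining h.
Definition valid_tiebreak (tb : tiebreak) : Prop :=
  forall h, perm_eq (tb h) (enum 'I_n).

Definition round_winner (tb : tiebreak) (b : profile) (h : history) : option 'I_n :=
  ohead [seq j <- tb h | [forall k, (b k h).1 <= (b j h).1]].

Definition step (tb : tiebreak) (b : profile) (h : history) : history :=
  if remaining h == set0 then h else
  match round_winner tb b h with
  | Some j => rcons h (j, (b j h).1, (b j h).2)
  | None => h
  end.

Definition run (tb : tiebreak) (b : profile) (t : nat) : history :=
  iter t (step tb b) [::].

Definition price (h : history) (x : 'I_m) : R :=
  head 0 [seq a.1.2 | a : announcement <- h & x \in a.2].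

Definition sorted_prices (h : history) (S : {set 'I_m}) : seq R :=
  sort (fun x y : R => x <= y) [seq price h x | x in S].

Definition sstar (S : {set 'I_m}) : nat := uphalf #|S|.

Definition ch_valuation (S : {set 'I_m}) (vhat : R) (T : {set 'I_m}) : R :=
  vhat * (#|T :&: S|)%:R.

Definition core_deviation (S : {set 'I_m}) (vhat : R) (bi : strategy)
    (i : 'I_n) : strategy :=
  fun h =>
    let k := #|won i h :&: S| in
    let avail := remaining h :&: S in
    if (sstar S <= k)%N || (#|avail| < sstar S - k)%N then (0, set0)
    else if vhat / 2 > (bi h).1 then
      (vhat / 2, [set x in take (sstar S - k) (enum avail)])
    else bi h.

Definition upd (b : profile) (i : 'I_n) (s : strategy) : profile :=
  fun j => if j == i then s else b j.

End DraftAuction.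

(* Main.v *)
Require Import Defs.
From HB Require Import structures.
From mathcomp Require Import all_boot all_order all_algebra.
Import Order.TTheory GRing.Theory Num.Theory.
Local Open Scope ring_scope.
Set Implicit Arguments. Unset Strict Implicit. Unset Printing Implicit Defensive.

Section Aux.
Variables (R : realFieldType) (n m : nat).

Lemma allocated_cons (a : announcement R n m) h :
  allocated (a :: h) = a.2 :|: allocated h.
Proof. by rewrite /allocated big_cons. Qed.

Lemma allocated_rcons (a : announcement R n m) h :
  allocated (rcons h a) = allocated h :|: a.2.
Proof. by rewrite /allocated big_rcons. Qed.

Lemma won_rcons j (a : announcement R n m) h :
  won j (rcons h a) = won j h :|: (if a.1.1 == j then a.2 else set0).
Proof. by rewrite /won big_rcons. Qed.

Lemma won_sub j (h : history R n m) : won j h \subset allocated h.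
Proof.
elim: h => [|a h IH]; first by rewrite /won /allocated !big_nil.
rewrite allocated_cons /won big_cons; case: ifP => _.
  by apply: setUSS.
by apply: subset_trans IH (subsetUr _ _).
Qed.

Lemma alloc_mem x (h : history R n m) :
  x \in allocated h -> has (fun a : announcement R n m => x \in a.2) h.
Proof.
elim: h => [|a h IH]; first by rewrite /allocated big_nil inE.
by rewrite allocated_cons inE /= => /orP[->//|/IH->]; rewrite orbT.
Qed.

Lemma price_cat (h h' : history R n m) x :
  x \in allocated h -> price (h ++ h') x \in [seq a.1.2 | a : announcement R n m <- h].
Proof.
move=> /alloc_mem Hx; rewrite /price filter_cat map_cat.
move: Hx; rewrite has_filter => Hne.
case E: [seq a : announcement R n m <- h | x \in a.2] Hne => [//|a s] _ /=.
have : a \in [seq a : announcement R n m <- h | x \in a.2] by rewrite E inE eqxx.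
by rewrite mem_filter => /andP[_ Ha]; apply: map_f.
Qed.

Lemma step_prefix tb (b : profile R n m) h : exists h', step tb b h = h ++ h'.
Proof.
rewrite /step; case: ifP => _; first by exists [::]; rewrite cats0.
case: round_winner => [j|]; last by exists [::]; rewrite cats0.
by eexists; rewrite -cats1.
Qed.

Lemma run_prefix tb (b : profile R n m) t T : (t <= T)%N ->
  exists h', run tb b T = run tb b t ++ h'.
Proof.
move=> le; rewrite -(subnKC le); elim: (T - t)%N => [|d [h' IH]].
  by exists [::]; rewrite addn0 cats0.
rewrite addnS /run iterS -/(run tb b (t + d)) IH.
have [h'' ->] := step_prefix tb b (run tb b t ++ h').
by exists (h' ++ h''); rewrite catA.
Qed.

Lemma ohead_filter_some (T : eqType) (P : pred T) s w :
  ohead (filter P s) = Some w -> P w.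
Proof.
elim: s => [//|x s IH] /=; case: ifP => // Px /= [<-] //.
Qed.

Lemma ohead_filter_transfer (T : eqType) (P Q : pred T) s w :
  ohead (filter P s) = Some w -> Q w -> (forall j, Q j -> P j) ->
  ohead (filter Q s) = Some w.
Proof.
move=> H Qw QP; elim: s H => [//|x s IH] /=.
case: ifP => Px /=.
  by move=> [E]; rewrite E Qw.
case: ifP => Qx; first by rewrite (QP _ Qx) in Px.
exact: IH.
Qed.

End Aux.

Section Main.
Variables (R : realFieldType) (n m : nat).
Variables (tb : tiebreak R n m) (b : profile R n m) (i : 'I_n)
  (S : {set 'I_m}) (vhat : R).
Hypothesis Htb : valid_tiebreak tb.

Lemma rw_exists (p : profile R n m) h :
  exists w, round_winner tb p h = Some w.
Proof.
pose w0 := [arg max_(j > i) (p j h).1]%O.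
have Hw0 : forall k, (p k h).1 <= (p w0 h).1.
  by rewrite /w0; case: arg_maxP => // j _ Hj k; apply: Hj.
have : has (fun j => [forall k, (p k h).1 <= (p j h).1]) (tb h).
  apply/hasP; exists w0; first by rewrite (perm_mem (Htb h)) mem_enum.
  by apply/forallP.
rewrite /round_winner has_filter.
by case: [seq _ <- _ | _] => [//|a s] _; exists a.
Qed.

Lemma rw_max (p : profile R n m) h w :
  round_winner tb p h = Some w -> forall k, (p k h).1 <= (p w h).1.
Proof. by move/ohead_filter_some/forallP. Qed.

Lemma rw_ext (p q : profile R n m) h : (forall j, p j h = q j h) ->
  round_winner tb p h = round_winner tb q h.
Proof.
move=> E; rewrite /round_winner; congr ohead; apply: eq_filter => j.
by apply: eq_forallb => k; rewrite !E.
Qed.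

Definition b' := upd b i (core_deviation S vhat (b i) i).
Definition kk (h : history R n m) := #|won i h :&: S|.
Definition dropb (h : history R n m) :=
  (sstar S <= kk h)%N || (#|remaining h :&: S| < sstar S - kk h)%N.

Lemma one_round h :
  ~~ dropb h -> (#|won i (step tb b' h) :&: S| < sstar S)%N ->
  step tb b' h = step tb b h /\
  (all (fun a : announcement R n m => vhat / 2 <= a.1.2) h ->
   all (fun a : announcement R n m => vhat / 2 <= a.1.2) (step tb b h)).
Proof.
move=> Hnd Hstep.
have Hoth : forall j, j != i -> b' j h = b j h.
  by move=> j /negbTE Hj; rewrite /b' /upd Hj.
move: Hstep; rewrite /step; case: ifP => Hrem; first by [].
case: (boolP ((b i h).1 < vhat / 2)) => Hlt; last first.
  have Hall : forall j, b' j h = b j h.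
    move=> j; case: (eqVneq j i) => [->|/Hoth //].
    by rewrite /b' /upd eqxx /core_deviation -/(kk h); move: Hnd; rewrite /dropb => /negbTE ->; rewrite (negbTE Hlt).
  rewrite (rw_ext Hall); case Ew: round_winner => [w|] //.
  rewrite Hall => _; split=> // Hh; rewrite all_rcons Hh andbT /=.
  apply: le_trans (rw_max Ew i); by rewrite leNgt.
have Hnd' := Hnd; move: Hnd'; rewrite /dropb negb_or -leqNgt -ltnNge => /andP[Hk Hav].
set X := [set x in take (sstar S - kk h) (enum (remaining h :&: S))].
have Hdev : b' i h = (vhat / 2, X).
  by rewrite /b' /upd eqxx /core_deviation -/(kk h) leqNgt Hk ltnNge Hav /= Hlt.
have [w Hw] := rw_exists b' h.
have Hwmax := rw_max Hw.
rewrite Hw.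
case: (eqVneq w i) => [Ewi|Hwi].
  rewrite Ewi won_rcons /= eqxx Hdev /=.
  have XS : X \subset remaining h :&: S.
    by apply/subsetP => x; rewrite inE => /mem_take; rewrite mem_enum.
  have HX : #|X| = (sstar S - kk h)%N.
    rewrite cardsE; have /card_uniqP -> : uniq (take (sstar S - kk h) (enum (remaining h :&: S))).
      by apply: take_uniq; apply: enum_uniq.
    by rewrite size_takel // -cardE.
  have Hdisj : (won i h :&: S) :&: X = set0.
    apply/setP => x; rewrite !inE; apply/negP => /andP[/andP[Hx _] HxX].
    move/subsetP: XS => /(_ x); rewrite inE => /(_ HxX); rewrite !inE => /andP[Hna _].
    by move/subsetP: (won_sub i h) => /(_ x Hx); rewrite (negbTE Hna).
  have -> : (won i h :|: X) :&: S = (won i h :&: S) :|: X.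
    rewrite setIUl; congr (_ :|: _); apply/setIidPl.
    by apply: subset_trans XS (subsetIr _ _).
  rewrite cardsU Hdisj cards0 subn0 HX -/(kk h).
  by rewrite subnKC ?ltnn // ltnW.
have Hbw : (b' w h).1 = (b w h).1 by rewrite Hoth.
have Hvw : vhat / 2 <= (b w h).1 by rewrite -Hbw; have := Hwmax i; rewrite Hdev.
have -> : round_winner tb b h = Some w.
  apply: (ohead_filter_transfer Hw).
    apply/forallP => k; case: (eqVneq k i) => [->|/Hoth <-].
      by apply: ltW; apply: lt_le_trans Hlt Hvw.
    by rewrite -Hbw.
  move=> j /forallP Hj; apply/forallP => k.
  case: (eqVneq j i) => [Eji|Hji].
    have := Hj w; rewrite Eji => H; have := lt_le_trans (le_lt_trans H Hlt) Hvw.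
    by rewrite ltxx.
  rewrite (Hoth j Hji); case: (eqVneq k i) => [->|/Hoth ->]; last exact: Hj.
  by rewrite Hdev /=; apply: le_trans Hvw (Hj w).
rewrite (Hoth w Hwi) => _; split=> // Hh; rewrite all_rcons Hh andbT /=.
exact: Hvw.
Qed.


Hypothesis Hk : forall t : nat,
  (#|won i (run tb b' t) :&: S| < sstar S)%N.

Lemma coincide t : (forall u, (u < t)%N -> ~~ dropb (run tb b u)) ->
  run tb b' t = run tb b t /\ all (fun a : announcement R n m => vhat / 2 <= a.1.2) (run tb b t).
Proof.
elim: t => [|t IH] Hu; first by [].
have [E1 E2] := IH (fun u Hu' => Hu u (ltnW Hu')).
have Hs : (#|won i (step tb b' (run tb b t)) :&: S| < sstar S)%N.
  by have := Hk t.+1; rewrite /run iterS -/(run tb b' t) E1.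
have [E3 E4] := one_round (Hu t (ltnSn t)) Hs.
by rewrite /run !iterS -/(run tb b' t) -/(run tb b t) E1 E3; split=> //; apply: E4.
Qed.

End Main.

Lemma count_enum_sub (T : finType) (A S : {set T}) : A \subset S ->
  count (mem A) (enum S) = #|A|.
Proof.
move=> AS; rewrite -size_filter.
have /card_uniqP <- : uniq [seq x <- enum S | x \in A] by rewrite filter_uniq ?enum_uniq.
apply: eq_card => x; rewrite mem_filter mem_enum.
by apply/andP/idP => [[]//|Hx]; split=> //; apply: (subsetP AS).
Qed.


Theorem mainTheorem9 (R : realFieldType) (n m : nat)
  (tb : tiebreak R n m) (b : profile R n m) (i : 'I_n)
  (S : {set 'I_m}) (vhat : R) :
  valid_tiebreak tb ->
  (forall j, valid_strategy (b j)) ->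
  forall T : nat, S \subset allocated (run tb b T) ->
  (forall t : nat,
     (#|won i (run tb (upd b i (core_deviation S vhat (b i) i)) t) :&: S|
        < sstar S)%N) ->
  vhat / 2 <= nth 0 (sorted_prices (run tb b T) S) (sstar S).-1.
Proof.
move=> Htb _ T HST Hk.
have Hs0 : (0 < sstar S)%N by have := Hk 0%N; case: (sstar S).
have HcS : forall h : history R n m,
    #|S| = (#|allocated h :&: S| + #|remaining h :&: S|)%N.
  move=> h; rewrite -(cardsID (allocated h) S) /remaining setDE.
  by rewrite [S :&: allocated h]setIC [S :&: _]setIC.
have [t0 [Ht0T [Hnd Hcnt]]] : exists t0, (t0 <= T)%N /\
    (forall u, (u < t0)%N -> ~~ dropb i S (run tb b u)) /\
    (#|S| < #|allocated (run tb b t0) :&: S| + sstar S)%N.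
  case: (boolP [exists u : 'I_T.+1, dropb i S (run tb b u)]) => [/existsP [u0 Hu0]|Hne].
    have ex : exists u, (u <= T)%N && dropb i S (run tb b u).
      by exists u0; rewrite Hu0 andbT -ltnS ltn_ord.
    have [u /andP[uT du] Hmin] := ex_minnP ex.
    have Hndu : forall v, (v < u)%N -> ~~ dropb i S (run tb b v).
      move=> v vu; apply/negP => dv.
      by have := Hmin v; rewrite dv andbT (leq_trans (ltnW vu) uT) => /(_ isT); rewrite leqNgt vu.
    exists u; split=> //; split=> //.
    have [E1 _] := coincide Htb Hk Hndu.
    have Hku : (kk i S (run tb b u) < sstar S)%N.
      by have := Hk u; rewrite [run tb _ u]E1.
    move: du; rewrite /dropb leqNgt Hku /= => du.
    rewrite (HcS (run tb b u)); rewrite ltn_add2l.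
    by apply: leq_trans du (leq_subr _ _).
  exists T; split=> //; split.
    move=> u uT; apply/negP => du; move/existsP: Hne; apply.
    by exists (Ordinal (ltnW uT : (u < T.+1)%N)).
  by rewrite (setIidPr HST) -[X in (X < _)%N]addn0 ltn_add2l.
have [_ Hall] := coincide Htb Hk Hnd.
have [h' Hpre] := run_prefix tb b Ht0T.
set A := allocated (run tb b t0) :&: S in Hcnt.
have HA : forall x, x \in A -> vhat / 2 <= price (run tb b T) x.
  move=> x; rewrite inE => /andP[Hx _]; rewrite Hpre.
  by have /mapP [a Ha ->] := price_cat h' Hx; exact: (allP Hall a Ha).
have AS : A \subset S by apply: subsetIr.
have HsS : (sstar S <= #|S|)%N by rewrite /sstar leq_uphalf_double -addnn leq_addr.
rewrite /sorted_prices; apply: nth_count_ge; first exact: sort_le_sorted.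
rewrite count_sort size_sort size_map -cardE.
have Hc : (count (fun x => (price (run tb b T) x < vhat / 2)%R) (enum S)
             <= #|S| - #|A|)%N.
  have <- : count (predC (mem A)) (enum S) = (#|S| - #|A|)%N.
    by rewrite [#|S|]cardE -(count_predC (mem A)) count_enum_sub // addKn.
  apply: sub_count => x /= Hx; apply/negP => /HA; by rewrite leNgt Hx.
rewrite count_map; apply/andP; split.
  apply: leq_trans Hc _; rewrite -ltnS prednK //; rewrite ltn_subLR //.
  by rewrite subset_leq_card.
by rewrite prednK //.
Qed.
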